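(* Fix $v\in[n]$. Let $G$ be a random variable with $\mathbb P(G\ge k)=2^{-k}$ for $k\in\{0,1,2,\dots\}$, independent of $\mathcal S_n(v)$, and let $D=\min\{G,|\mathcal S_n(v)|\}$. Then $d_n(v)\stackrel{\mathcal L}{=}D$, and for all $k,l\in\mathbb N$, \[\mathbb P(d_n(v)\ge k,\ h_n(v)\le l)=2^{-k}\,\mathbb P\big(\mathrm{Bin}(|\mathcal S_n(v)|-k,1/2)\le l,\ |\mathcal S_n(v)|\ge k\big),\] where, conditionally on $|\mathcal S_n(v)|$, the binomial variable has $|\mathcal S_n(v)|-k$ trials with success probability $1/2$.
   Context: Kingman's $n$-coalescent $(F_n,\dots,F_1)$: forests on $[n]$, rooted trees with edges directed towards roots; $F_n$ has no edges; for $2\le i\le n$, list the trees of $F_i$ as $T^{(i)}_1,\dots,T^{(i)}_i$ in increasing order of smallest label, choose $\{a_i,b_i\}$ uniformly among 2-subsets of $[i]$ and an independent fair bit $\xi_i$ (all independent over $i$), and obtain $F_{i-1}$ by adding an edge between the roots of $T^{(i)}_{a_i},T^{(i)}_{b_i}$ directed towards the root of $T^{(i)}_{\min(a_i,b_i)}$ if $\xi_i=1$, towards the other root otherwise (the head becomes the root of the merged tree). $T^{(n)}$ is the unique tree of $F_1$; $d_n(v)$ and $h_n(v)$ are the number of children and the depth of $v$ in $T^{(n)}$. For $v\in[n]$ and $1\le i\le n$, $T_i(v)$ is the tree of $F_i$ containing $v$. The selection set is $\mathcal S_n(v)=\{2\le i\le n: T_i(v)\in\{T^{(i)}_{a_i},T^{(i)}_{b_i}\}\}$.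 *)

(* Defs.v *)
From HB Require Import structures.
From mathcomp Require Import all_boot all_order all_algebra.
Set Implicit Arguments. Unset Strict Implicit. Unset Printing Implicit Defensive.
Import Order.TTheory GRing.Theory Num.Theory.

(* Labels [n] = {1..n} are represented by 'I_n = {0..n-1} (order preserved);
   tree indices 1..i are represented by 0..i-1.
   A forest is a parent map p : 'I_n -> 'I_n, with p r = r exactly for roots. *)
Definition forest (n : nat) := 'I_n -> 'I_n.

Definition froot n (p : forest n) (u : 'I_n) : 'I_n := iter n p u.

(* roots of the trees, listed in increasing order of the smallest label of the tree *)
Definition trees n (p : forest n) : seq 'I_n :=
  undup [seq froot p u | u <- enum 'I_n].

(* one step's randomness: a 2-subset {a,b} of tree indices and a bit xi *)
Definition choice_t n := ({set 'I_n} * bool)%type.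

(* the roots of T_a and T_b (with a < b), in that order *)
Definition chosen_roots n (c : choice_t n) (p : forest n) : seq 'I_n :=
  let idx := [seq val x | x <- enum c.1] in
  let a := nth 0 idx 0 in
  let b := nth 0 idx 1 in
  let ts := trees p in
  match ts with
  | [::] => [::]
  | t0 :: _ => [:: nth t0 ts a; nth t0 ts b]
  end.

(* F_i -> F_{i-1}: edge between the two roots, directed towards the root of
   T_{min(a,b)} if xi = true, towards the other root otherwise *)
Definition merge n (c : choice_t n) (p : forest n) : forest n :=
  match chosen_roots c p with
  | [:: ra; rb] =>
      let hd := if c.2 then ra else rb in
      let tl := if c.2 then rb else ra in
      fun u => if u == tl then hd else p u
  | _ => p
  end.

(* sample space: omega i = (set {a_i,b_i}, xi_i) for 2 <= i <= n; dummy otherwise *)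
Definition outcome n := {ffun 'I_n.+1 -> choice_t n}.

Definition Omega n : {set outcome n} :=
  [set w : outcome n | [forall i : 'I_n.+1,
     if 2 <= i then (#|(w i).1| == 2) && [forall x in (w i).1, x < i]
     else w i == (set0, false)]].

(* forest after k merges, i.e. F_{n-k} *)
Fixpoint after n (w : outcome n) (k : nat) : forest n :=
  match k with
  | 0 => id
  | k'.+1 => merge (w (inord (n - k'))) (after w k')
  end.

Definition F n (w : outcome n) (i : nat) : forest n := after w (n - i).

Definition Tn n (w : outcome n) : forest n := F w 1.

Definition dn n (w : outcome n) (v : 'I_n) : nat :=
  #|[set u : 'I_n | (u != v) && (Tn w u == v)]|.

Definition hn n (w : outcome n) (v : 'I_n) : nat :=
  let p := Tn w in find (fun k => p (iter k p v) == iter k p v) (iota 0 n).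

Definition Sel n (w : outcome n) (v : 'I_n) : {set 'I_n.+1} :=
  [set i : 'I_n.+1 | (2 <= i) &&
     (froot (F w i) v \in chosen_roots (w i) (F w i))].

Local Open Scope ring_scope.

(* probability of an event under the uniform (= product) measure on Omega n *)
Definition Pr n (E : pred (outcome n)) : rat :=
  #|[set w in Omega n | E w]|%:R / #|Omega n|%:R.

(* G with P(G >= k) = 2^-k *)
Definition tailG (k : nat) : rat := (2 : rat) ^- k.

(* P(min(G, s) = k) *)
Definition PminG (s k : nat) : rat :=
  if (k < s)%N then tailG k - tailG k.+1
  else if k == s then tailG s else 0.

(* P(Bin(m, 1/2) <= l) *)
Definition binom_cdf (m l : nat) : rat :=
  \sum_(j < l.+1) ('C(m, j))%:R / (2 : rat) ^+ m.

(* Main.v *)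
Require Import Defs.
From HB Require Import structures.
From mathcomp Require Import all_boot all_order all_algebra.
From mathcomp Require Import zify ring.
From Stdlib Require Import FunctionalExtensionality.
Import Order.TTheory GRing.Theory Num.Theory.
Set Implicit Arguments. Unset Strict Implicit. Unset Printing Implicit Defensive.
Notation froot := Defs.froot.
Notation merge := Defs.merge.
Section Forest.
Variable n : nat.
Implicit Types (p q : forest n) (u x y : 'I_n).

Definition acyc p := forall u k, iter k.+1 p u = u -> p u = u.

Lemma iter_fix p x k : p x = x -> iter k p x = x.
Proof. by move=> h; elim: k => //= k ->. Qed.

Lemma iter_fix_ge p u j m : p (iter j p u) = iter j p u -> j <= m -> iter m p u = iter j p u.
Proof. move=> h /subnK <-. by rewrite iterD iter_fix. Qed.

Lemma iter_cycle p u i j : acyc p -> i < j -> iter i p u = iter j p u ->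
  p (iter i p u) = iter i p u.
Proof.
move=> ac lij e; apply: (ac _ (j - i).-1).
rewrite -iterD prednK ?subn_gt0 // subnK ?(ltnW lij) //.
Qed.

Lemma iter_bound p u : acyc p -> p (iter n.-1 p u) = iter n.-1 p u.
Proof.
move=> ac; case: (boolP (p (iter n.-1 p u) == iter n.-1 p u)) => [/eqP //|H].
have nf : forall j, j <= n.-1 -> p (iter j p u) != iter j p u.
  move=> j lj; apply: contraNN H => /eqP h. by rewrite (iter_fix_ge h lj) h.
have n0 : 0 < n by case: n u {nf H} => [[]|].
have ltnSpred : forall j, 0 < n -> j < n -> j <= n.-1 by move=> j _; lia.
pose f := fun j : 'I_n => iter j p u.
have inj : injective f.
  move=> i j e; apply: val_inj => /=.
  have li := ltn_ord i; have lj := ltn_ord j.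
  case: (ltngtP i j) => // lt.
  - by move: (nf i (ltnSpred _ n0 li)); rewrite (iter_cycle ac lt e) eqxx.
  - by move: (nf j (ltnSpred _ n0 lj)); rewrite (iter_cycle ac lt (esym e)) eqxx.
have /codomP [j ej] := inj_card_onto inj (leqnn _) (iter n p u).
have lj := ltn_ord j.
by move: (nf j (ltnSpred _ n0 lj)); rewrite (iter_cycle ac lj (esym ej)) eqxx.
Qed.
End Forest.
Section Forest2.
Variable n : nat.
Implicit Types (p q : forest n) (u x y : 'I_n).

Lemma n_pos u : 0 < n. Proof. by case: n u => [[]|]. Qed.

Lemma froot_iter p u : acyc p -> froot p u = iter n.-1 p u.
Proof.
move=> ac; rewrite /froot.
have e : n = n.-1.+1 := esym (prednK (n_pos u)).
rewrite (congr1 (fun k => iter k p u) e) /=.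
by rewrite iter_bound.
Qed.

Lemma froot_fixed p u : acyc p -> p (froot p u) = froot p u.
Proof. by move=> ac; rewrite froot_iter // iter_bound. Qed.

Lemma froot_reach p u r j : acyc p -> p r = r -> iter j p u = r -> froot p u = r.
Proof.
move=> ac pr e.
have h1 : iter (maxn j n.-1) p u = r.
  by rewrite (@iter_fix_ge _ _ _ j) ?leq_maxl // e.
have h2 := @iter_fix_ge _ p u n.-1 (maxn j n.-1) (iter_bound u ac) (leq_maxr _ _).
by rewrite froot_iter // -h2.
Qed.

Lemma find_iota (P : pred nat) N m j : P (m + j) -> (forall j', j' < j -> ~~ P (m + j')) ->
  j < N -> find P (iota m N) = j.
Proof.
elim: N m j => // N IH m j Pj nP ljN /=.
case: j Pj nP ljN => [|j] Pj nP ljN; first by rewrite addn0 in Pj; rewrite Pj.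
have -> : P m = false by apply/negbTE; move: (nP 0 isT); rewrite addn0.
congr (_.+1); apply: IH; first by rewrite addSnnS.
  by move=> j' lj'; rewrite addSnnS; apply: nP.
done.
Qed.

Definition depth p u := find (fun k => p (iter k p u) == iter k p u) (iota 0 n).
Definition cnt p v := #|[set u | (u != v) && (p u == v)]|.

Lemma depth_spec p u j : acyc p -> p (iter j p u) = iter j p u ->
  (forall j', j' < j -> p (iter j' p u) != iter j' p u) -> depth p u = j.
Proof.
move=> ac Pj nP.
have ljn : j < n.
  have n0 := n_pos u.
  case: (ltnP j n) => // lnj.
  have h : n.-1 < j by lia.
  by move: (nP n.-1 h); rewrite iter_bound // eqxx.
apply: find_iota => //=; rewrite ?add0n ?Pj //.
Qed.
End Forest2.
Section Merge.
Variable n : nat.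
Variables (p p' : forest n) (hd tl : 'I_n).
Hypothesis ac : acyc p.
Hypothesis phd : p hd = hd.
Hypothesis ptl : p tl = tl.
Hypothesis sp : forall u, p' u = if u == tl then hd else p u.

Lemma p'hd : p' hd = hd.
Proof. by rewrite sp; case: eqP. Qed.

Lemma notl_iter u : froot p u != tl -> forall m, iter m p' u = iter m p u.
Proof.
move=> H.
have nt : forall m, iter m p u != tl.
  move=> m; apply: contraNN H => /eqP e; apply/eqP; exact: froot_reach e.
elim=> //= m ->; rewrite sp; by move/negbTE: (nt m) => ->.
Qed.

Lemma tl_case u : froot p u = tl -> exists j,
  [/\ iter j.+1 p' u = hd, (forall m, m <= j -> iter m p' u = iter m p u),
      iter j p u = tl & (forall m, m < j -> iter m p u != tl)].
Proof.
move=> H.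
have ex : exists j, iter j p u == tl by exists n; rewrite -H.
case: (find_ex_minn ex) => j /eqP Hj Hmin.
have nt : forall m, m < j -> iter m p u != tl.
  move=> m lm; apply/negP => /Hmin; by rewrite leqNgt lm.
have agree : forall m, m <= j -> iter m p' u = iter m p u.
  elim=> //= m IH lm; rewrite IH ?(ltnW lm) // sp.
  by move/negbTE: (nt m lm) => ->.
exists j; split => //=.
by rewrite agree // Hj sp eqxx.
Qed.

Lemma iter_mul (f : 'I_n -> 'I_n) x k c : iter k f x = x -> iter (c * k) f x = x.
Proof. move=> h; elim: c => //= c IH; by rewrite mulSn iterD IH h. Qed.

Lemma acyc_merge : acyc p'.
Proof.
move=> u k e.
case: (eqVneq (froot p u) tl) => H.
  have [j [h1 _ _ _]] := tl_case H.
  have hh : forall m, j.+1 <= m -> iter m p' u = hd.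
    move=> m lm; rewrite -(subnK lm) iterD h1; exact: iter_fix p'hd.
  have : iter (j.+1 * k.+1) p' u = u by apply: iter_mul.
  rewrite hh; last by rewrite leq_pmulr.
  by move=> <-; rewrite p'hd.
have e2 : iter k.+1 p u = u by rewrite -(notl_iter H).
have ntu : u != tl.
  apply: contraNN H => /eqP ->; apply/eqP; exact: (@froot_reach _ _ _ _ 0).
by rewrite sp (negbTE ntu); apply: (ac e2).
Qed.

Lemma froot_merge u : froot p' u = if froot p u == tl then hd else froot p u.
Proof.
case: (eqVneq (froot p u) tl) => H.
  have [j [h1 _ _ _]] := tl_case H.
  exact: (froot_reach acyc_merge p'hd h1).
apply: (@froot_reach _ _ _ _ n acyc_merge).
  rewrite sp; case: eqP => [e|_]; last by apply: froot_fixed.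
  by rewrite e eqxx in H.
by rewrite notl_iter.
Qed.

Hypothesis hdtl : hd != tl.

Lemma notfix_tl u m : froot p u = tl -> iter m p u != tl -> p (iter m p u) != iter m p u.
Proof.
move=> H; apply: contraNN => /eqP e; apply/eqP.
by rewrite -H; symmetry; apply: (froot_reach ac e).
Qed.

Lemma depth_merge u : depth p' u = depth p u + (froot p u == tl).
Proof.
case: (eqVneq (froot p u) tl) => H; last first.
  rewrite addn0 /depth; apply: eq_find => k /=.
  rewrite notl_iter // sp.
  have nt : iter k p u != tl.
    apply: contraNN H => /eqP e; apply/eqP; exact: froot_reach e.
  by rewrite (negbTE nt).
have [j [h1 h2 h3 h4]] := tl_case H.
have dj : depth p u = j.
  apply: depth_spec => //; first by rewrite h3.
  by move=> m lm; apply: notfix_tl => //; apply: h4.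
rewrite dj addn1; apply: depth_spec; first exact: acyc_merge.
  by rewrite h1 p'hd.
move=> m; rewrite ltnS leq_eqVlt => /orP [/eqP ->|lm].
  by rewrite (h2 j (leqnn j)) h3 sp eqxx.
rewrite h2 ?(ltnW lm) // sp (negbTE (h4 m lm)).
by apply: notfix_tl => //; apply: h4.
Qed.

Lemma cnt_merge v : cnt p' v = cnt p v + (v == hd).
Proof.
rewrite /cnt; case: (eqVneq v hd) => [->|nv].
  rewrite addn1.
  have -> : [set u | (u != hd) && (p' u == hd)] = tl |: [set u | (u != hd) && (p u == hd)].
    apply/setP => u; rewrite !inE sp; case: (eqVneq u tl) => [->|nut] /=.
      by rewrite eqxx andbT eq_sym.
    by [].
  by rewrite cardsU1 inE ptl; case: (tl == hd).
rewrite addn0; apply: eq_card => u; rewrite !inE sp.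
case: (eqVneq u tl) => [->|//]; rewrite ptl.
by case: (eqVneq tl v) => //= _; rewrite eq_sym (negbTE nv).
Qed.

Lemma alive_merge v : (p' v == v) = (p v == v) && (v != tl).
Proof.
rewrite sp; case: (eqVneq v tl) => [->|_] /=; last by rewrite andbT.
by rewrite ptl eqxx (negbTE hdtl).
Qed.
End Merge.
Lemma undup_rel (T U V : eqType) (f : T -> U) (g : T -> V) (s : seq T) :
  (forall x y, (f x == f y) = (g x == g y)) ->
  size (undup (map f s)) = size (undup (map g s)) /\
  forall x, index (f x) (undup (map f s)) = index (g x) (undup (map g s)).
Proof.
move=> R; elim: s => [|y s [IH1 IH2]] //=.
have -> : (f y \in map f s) = (g y \in map g s).
  rewrite -!has_pred1 !has_map; apply: eq_has => z /=.
  by rewrite /preim /= eq_sym R eq_sym.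
case: (g y \in map g s) => //=; split; [by rewrite IH1 | move=> x].
by rewrite R IH2.
Qed.

Section Trees.
Variable n : nat.
Implicit Types (p q : forest n) (u x y d : 'I_n) (c : choice_t n).

Lemma froot_in_trees p x : froot p x \in trees p.
Proof. by rewrite /trees mem_undup; apply: map_f; rewrite mem_enum. Qed.

Lemma trees_uniq p : uniq (trees p). Proof. exact: undup_uniq. Qed.

Lemma trees_fixed p r : acyc p -> r \in trees p -> p r = r.
Proof.
move=> ac; rewrite /trees mem_undup => /mapP [u _ ->]; exact: froot_fixed.
Qed.

Definition rel_eq p q := forall x y, (froot p x == froot p y) = (froot q x == froot q y).

Lemma rel_size p q : rel_eq p q -> size (trees p) = size (trees q).
Proof. by move=> R; case: (undup_rel (enum 'I_n) R). Qed.

Lemma rel_index p q x : rel_eq p q ->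
  index (froot p x) (trees p) = index (froot q x) (trees q).
Proof. by move=> R; case: (undup_rel (enum 'I_n) R). Qed.

Definition nthc (a sz : nat) := if a < sz then a else 0.

Lemma nth_head_eq (T : eqType) (d : T) (ts : seq T) a j : uniq ts -> j < size ts ->
  (nth (head d ts) ts a == nth (head d ts) ts j) = (nthc a (size ts) == j).
Proof.
move=> U lj; rewrite /nthc; case: ltnP => la; first by rewrite nth_uniq.
rewrite nth_default //.
have s0 : 0 < size ts by apply: leq_ltn_trans lj.
have e : head d ts = nth (head d ts) ts 0 by case: ts s0 {U lj la}.
by rewrite {1}e nth_uniq.
Qed.

Definition ia (c : choice_t n) := nth 0 [seq val x | x <- enum c.1] 0.
Definition ib (c : choice_t n) := nth 0 [seq val x | x <- enum c.1] 1.
Definition ra p c (d : 'I_n) := nth (head d (trees p)) (trees p) (ia c).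
Definition rb p c (d : 'I_n) := nth (head d (trees p)) (trees p) (ib c).

Lemma chosenE p c d : chosen_roots c p = [:: ra p c d; rb p c d].
Proof.
rewrite /chosen_roots /ra /rb /ia /ib.
have : froot p d \in trees p := froot_in_trees p d.
by case: (trees p).
Qed.

Definition hdm p c d := if c.2 then ra p c d else rb p c d.
Definition tlm p c d := if c.2 then rb p c d else ra p c d.

Lemma mergeE p c d u : merge c p u = if u == tlm p c d then hdm p c d else p u.
Proof. by rewrite /merge (chosenE p c d) /hdm /tlm. Qed.

Lemma ra_in p c d : ra p c d \in trees p.
Proof.
rewrite /ra; case: (ltnP (ia c) (size (trees p))) => h; first exact: mem_nth.
rewrite nth_default //; have := froot_in_trees p d; case: (trees p) => [|a l] //= _; exact: mem_head.
Qed.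

Lemma rb_in p c d : rb p c d \in trees p.
Proof.
rewrite /rb; case: (ltnP (ib c) (size (trees p))) => h; first exact: mem_nth.
rewrite nth_default //; have := froot_in_trees p d; case: (trees p) => [|a l] //= _; exact: mem_head.
Qed.

Lemma acyc_mergeS p c d : acyc p -> acyc (merge c p).
Proof.
move=> ac; apply: (@acyc_merge _ p _ (hdm p c d) (tlm p c d)) => //.
- by rewrite /hdm; case: c.2; apply: trees_fixed => //; [apply: ra_in|apply: rb_in].
- by rewrite /tlm; case: c.2; apply: trees_fixed => //; [apply: rb_in|apply: ra_in].
- by move=> u; apply: mergeE.
Qed.

Lemma froot_mergeS p c d u : acyc p ->
  froot (merge c p) u = if froot p u == tlm p c d then hdm p c d else froot p u.
Proof.
move=> ac; apply: (@froot_merge _ p _ (hdm p c d) (tlm p c d)) => //.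
- by rewrite /hdm; case: c.2; apply: trees_fixed => //; [apply: ra_in|apply: rb_in].
- by rewrite /tlm; case: c.2; apply: trees_fixed => //; [apply: rb_in|apply: ra_in].
- by move=> w; apply: mergeE.
Qed.

Lemma inr_eq p c d x : (froot p x == ra p c d) =
  (nthc (ia c) (size (trees p)) == index (froot p x) (trees p)).
Proof.
rewrite /ra -{1}(nth_index (head d (trees p)) (froot_in_trees p x)) eq_sym.
by rewrite nth_head_eq ?trees_uniq ?index_mem ?froot_in_trees.
Qed.

Lemma inrb_eq p c d x : (froot p x == rb p c d) =
  (nthc (ib c) (size (trees p)) == index (froot p x) (trees p)).
Proof.
rewrite /rb -{1}(nth_index (head d (trees p)) (froot_in_trees p x)) eq_sym.
by rewrite nth_head_eq ?trees_uniq ?index_mem ?froot_in_trees.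
Qed.

Lemma phi_eq (T : eqType) (hd tl X Y : T) :
  ((if X == tl then hd else X) == (if Y == tl then hd else Y)) =
  (X == Y) || ((X \in [:: hd; tl]) && (Y \in [:: hd; tl])).
Proof.
rewrite !inE.
case: (eqVneq X tl) => [->|nX]; case: (eqVneq Y tl) => [->|nY].
- by rewrite eqxx.
- by rewrite orbT orbF /= eq_sym.
- by rewrite orbT orbF andbT /= (negbTE nX).
- rewrite !orbF; case: (eqVneq X Y) => //= nXY; case: (eqVneq X hd) => //= eXh.
  by rewrite -eXh eq_sym (negbTE nXY).
Qed.


Lemma rel_merge p q c c' d : acyc p -> acyc q -> rel_eq p q -> c.1 = c'.1 ->
  rel_eq (merge c p) (merge c' q).
Proof.
move=> ap aq R e x y.
rewrite !(froot_mergeS _ d) // !phi_eq.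
have hm : forall z, (froot p z \in [:: hdm p c d; tlm p c d]) =
                    (froot q z \in [:: hdm q c' d; tlm q c' d]).
  move=> z; rewrite /hdm /tlm.
  have E : forall (a b: 'I_n) , [:: a; b] =i [:: b; a] by move=> a b t; rewrite !inE orbC.
  have -> : (froot p z \in [:: (if c.2 then ra p c d else rb p c d); (if c.2 then rb p c d else ra p c d)]) = (froot p z \in [:: ra p c d; rb p c d]) by case: c.2; rewrite // E.
  have -> : (froot q z \in [:: (if c'.2 then ra q c' d else rb q c' d); (if c'.2 then rb q c' d else ra q c' d)]) = (froot q z \in [:: ra q c' d; rb q c' d]) by case: c'.2; rewrite // E.
  rewrite !inE inr_eq inrb_eq inr_eq inrb_eq /ia /ib e.
  by rewrite (rel_size R) (rel_index _ R).
by rewrite R !hm.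
Qed.
End Trees.
Section Process.
Variables (n : nat) (v : 'I_n).
Implicit Types (w : outcome n) (p q : forest n) (c : choice_t n).

Lemma acyc_id : acyc (id : forest n). Proof. by []. Qed.

Lemma after_acyc w k : acyc (after w k).
Proof. elim: k => [|k IH] /=; [exact: acyc_id | exact: (@acyc_mergeS n _ _ v IH)]. Qed.

Definition sig_eq w w' := forall i, (w i).1 = (w' i).1.

Lemma after_rel w w' : sig_eq w w' -> forall k, rel_eq (after w k) (after w' k).
Proof.
move=> E; elim=> [|k IH] /=; first by [].
apply: (rel_merge v) => //; exact: after_acyc.
Qed.

Lemma inch_rel p q c c' x : rel_eq p q -> c.1 = c'.1 ->
  (froot p x \in chosen_roots c p) = (froot q x \in chosen_roots c' q).
Proof.
move=> R e; rewrite (chosenE _ _ v) (chosenE _ _ v) !inE.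
rewrite inr_eq inrb_eq inr_eq inrb_eq /ia /ib e.
by rewrite (rel_size R) (rel_index _ R).
Qed.

Lemma isA_rel p q c c' x : rel_eq p q -> c.1 = c'.1 ->
  (froot p x == ra p c v) = (froot q x == ra q c' v).
Proof.
move=> R e; rewrite inr_eq inr_eq /ia e.
by rewrite (rel_size R) (rel_index _ R).
Qed.

Lemma Sel_inv w w' : sig_eq w w' -> Sel w v = Sel w' v.
Proof.
move=> E; apply/setP => i; rewrite !inE; congr (_ && _).
apply: inch_rel; [exact: after_rel | exact: E].
Qed.

Lemma trees_id : size (trees (id : forest n)) = n.
Proof.
rewrite /trees (@eq_map _ _ _ id); last by move=> u; rewrite /froot; apply: iter_fix.
by rewrite map_id undup_id ?enum_uniq // size_enum_ord.
Qed.

Lemma size_undup_card (s : seq 'I_n) : size (undup s) = #|s|.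
Proof.
have /card_uniqP <- := undup_uniq s.
by apply: eq_card => x; rewrite mem_undup.
Qed.

Lemma size_merge p c : acyc p -> ra p c v != rb p c v ->
  size (trees (merge c p)) = (size (trees p)).-1.
Proof.
move=> ac nab.
set hd := hdm p c v; set tl := tlm p c v.
have hdtl : hd != tl by rewrite /hd /tl /hdm /tlm; case: c.2; rewrite // eq_sym.
have hdin : hd \in trees p by rewrite /hd /hdm; case: c.2; [apply: ra_in|apply: rb_in].
have tlin : tl \in trees p by rewrite /tl /tlm; case: c.2; [apply: rb_in|apply: ra_in].
rewrite /trees.
rewrite (@eq_map _ _ _ ((fun X => if X == tl then hd else X) \o froot p)); last first.
  by move=> u; rewrite /= (froot_mergeS _ v).
rewrite map_comp !size_undup_card.
set s := map (froot p) _.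
have hs : tl \in s by move: tlin; rewrite /trees mem_undup.
have hh : hd \in s by move: hdin; rewrite /trees mem_undup.
rewrite [in RHS](cardD1 tl) hs add1n /=; apply: eq_card => z; rewrite !inE.
apply/mapP/andP => [[y ys ->]|[nz zs]].
  case: (eqVneq y tl) => [_|ny]; first by split.
  by split.
by exists z => //; rewrite (negbTE nz).
Qed.
End Process.
Section Process2.
Variables (n : nat) (v : 'I_n).
Implicit Types (w : outcome n) (p q : forest n) (c : choice_t n).

Lemma omega_at w (t : 'I_n.+1) : w \in Omega n -> 2 <= t ->
  #|(w t).1| = 2 /\ forall x, x \in (w t).1 -> x < t.
Proof.
rewrite inE => /forallP H ht; move: (H t); rewrite ht => /andP [/eqP c2 /forall_inP al].
by split => // x /al.
Qed.

Lemma iaib (A : {set 'I_n}) (t : nat) : #|A| = 2 -> (forall x, x \in A -> x < t) ->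
  [/\ ia (A, true) != ib (A, true), ia (A, true) < t & ib (A, true) < t].
Proof.
move=> c2 al; rewrite /ia /ib /=.
set s := [seq val x | x <- enum A].
have ss : size s = 2 by rewrite size_map -cardE.
have us : uniq s by rewrite map_inj_uniq ?enum_uniq //; apply: val_inj.
have mt : forall k, k < 2 -> nth 0 s k < t.
  move=> k lk; have : nth 0 s k \in s by rewrite mem_nth ?ss.
  by case/mapP => x; rewrite mem_enum => /al ? ->.
split; [by rewrite nth_uniq ?ss | exact: mt | exact: mt].
Qed.

Lemma inordK' K : K <= n -> nat_of_ord (inord (n - K) : 'I_n.+1) = n - K.
Proof. by move=> h; rewrite inordK // ltnS leq_subr. Qed.

Lemma F_inord w K : K <= n -> F w (inord (n - K) : 'I_n.+1) = after w K.
Proof. by move=> h; rewrite /F inordK' // subKn. Qed.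

Lemma ab_distinct w K : w \in Omega n -> K < n.-1 ->
  size (trees (after w K)) = n - K ->
  ra (after w K) (w (inord (n - K))) v != rb (after w K) (w (inord (n - K))) v.
Proof.
move=> wO lK sz.
set t : 'I_n.+1 := inord (n - K).
have vt : nat_of_ord t = n - K by rewrite /t inordK' //; lia.
have t2 : 2 <= t by rewrite vt; lia.
have [c2 al] := omega_at wO t2.
have [nab la lb] := iaib c2 al.
rewrite /ra /rb; move: nab la lb; rewrite /ia /ib /= => nab la lb.
rewrite nth_uniq ?trees_uniq ?sz -?vt //.
Qed.

Lemma size_after w : w \in Omega n -> forall K, K <= n.-1 -> size (trees (after w K)) = n - K.
Proof.
move=> wO; elim=> [|K IH] lK; first by rewrite trees_id subn0.
have lK' : K < n.-1 by [].
rewrite /= (@size_merge _ v); first by rewrite IH ?(ltnW lK'); lia.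
  exact: after_acyc.
exact: ab_distinct (IH (ltnW lK')).
Qed.
End Process2.
Fixpoint lead (s : seq bool) : nat :=
  if s is b :: s' then (if b then (lead s').+1 else 0) else 0.

Lemma lead_rcons s b : lead (rcons s b) = lead s + (all id s && b).
Proof.
elim: s => [|x s IH] /=; first by case: b.
by case: x => //=; rewrite IH.
Qed.

Section Process3.
Variables (n : nat) (v : 'I_n).
Implicit Types (w : outcome n) (p q : forest n) (c : choice_t n).

Definition times K : seq 'I_n.+1 := [seq inord (n - k) | k <- iota 0 K].
Definition Ls w K := [seq t <- times K | t \in Sel w v].
Definition om w (t : 'I_n.+1) := froot (F w t) v == hdm (F w t) (w t) v.
Definition ws w K := map (om w) (Ls w K).

Lemma times_rcons K : times K.+1 = rcons (times K) (inord (n - K)).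
Proof. rewrite /times; have -> : iota 0 K.+1 = iota 0 K ++ [:: K] by rewrite -addn1 iotaD.
by rewrite map_cat cats1. Qed.

Lemma ws_rcons w K : ws w K.+1 =
  if inord (n - K) \in Sel w v then rcons (ws w K) (om w (inord (n - K))) else ws w K.
Proof.
rewrite /ws /Ls times_rcons filter_rcons; case: ifP => //= _.
by rewrite map_rcons.
Qed.

Lemma hdtl_after w K : w \in Omega n -> K < n.-1 ->
  hdm (after w K) (w (inord (n - K))) v != tlm (after w K) (w (inord (n - K))) v.
Proof.
move=> wO lK.
have := ab_distinct v wO lK (size_after v wO (ltnW lK)).
by rewrite /hdm /tlm; case: (w (inord (n - K))).2; rewrite // eq_sym.
Qed.

Lemma Sel_step w K : K < n.-1 ->
  (inord (n - K) \in Sel w v) =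
  (froot (after w K) v \in [:: hdm (after w K) (w (inord (n - K))) v;
                              tlm (after w K) (w (inord (n - K))) v]).
Proof.
move=> lK; rewrite inE inordK'; last lia.
have -> : 2 <= n - K by lia.
rewrite /F subKn; last lia.
rewrite (chosenE _ _ v) /hdm /tlm /=; case: (w (inord (n - K))).2 => //.
by rewrite !inE orbC.
Qed.

Lemma invariant w : w \in Omega n -> forall K, K <= n.-1 ->
  [/\ cnt (after w K) v = lead (ws w K),
      depth (after w K) v = count negb (ws w K) &
      (after w K v == v) = all id (ws w K)].
Proof.
move=> wO; elim=> [|K IH] lK.
  rewrite /ws /Ls /times /=; split => //.
  - rewrite /cnt (eq_card (B := pred0)) ?card0 // => u; rewrite !inE.
    by case: eqP => //= ->; rewrite eqxx.
  - by apply: depth_spec; [exact: acyc_id | | ].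
  - by rewrite eqxx.
have lK' : K < n.-1 by [].
have [IH1 IH2 IH3] := IH (ltnW lK').
set p := after w K.
set c := w (inord (n - K)).
set hd := hdm p c v; set tl := tlm p c v.
have ac : acyc p by move=> ? ?; apply: (after_acyc v).
have hdin : hd \in trees p by rewrite /hd /hdm; case: c.2; [apply: ra_in|apply: rb_in].
have tlin : tl \in trees p by rewrite /tl /tlm; case: c.2; [apply: rb_in|apply: ra_in].
have phd : p hd = hd by apply: trees_fixed.
have ptl : p tl = tl by apply: trees_fixed.
have sp : forall u, merge c p u = if u == tl then hd else p u by move=> u; apply: mergeE.
have hdtl : hd != tl by apply: hdtl_after.
have eK : after w K.+1 = merge c p by [].
have omE : om w (inord (n - K)) = (froot p v == hd).
  by rewrite /om F_inord //; lia.
rewrite eK ws_rcons Sel_step // -/p -/c -/hd -/tl omE.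
rewrite (cnt_merge ptl sp hdtl) (depth_merge ac phd ptl sp hdtl) (alive_merge ptl sp hdtl).
rewrite IH1 IH2.
have alv : (p v == v) -> froot p v = v.
  by move/eqP => e; apply: (@froot_reach _ _ _ _ 0).
have vhd : (v == hd) = (p v == v) && (froot p v == hd).
  case: (eqVneq v hd) => [e|ne].
    have pv : p v = v by rewrite e phd.
    by rewrite pv eqxx alv ?pv // -e eqxx.
  case: (eqVneq (p v) v) => [pv|//]; rewrite alv ?pv ?eqxx //.
  by rewrite (negbTE ne).
have vtl : (p v == v) -> (v != tl) = (froot p v != tl).
  by move=> pv; rewrite alv.
rewrite !inE.
have lr : forall s b, lead (s ++ [:: b]) = lead s + (all id s && b).
  by move=> s b; rewrite cats1 lead_rcons.
case: (eqVneq (froot p v) hd) => [fh|fnh] /=.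
- rewrite -!cats1 !all_cat !count_cat /= !andbT !addn0.
  rewrite lr fh (negbTE hdtl) /= andbT addn0 -IH3 -/p; split => //.
  + by rewrite vhd fh eqxx andbT.
  + case: (eqVneq (p v) v) => //= pv; by rewrite vtl ?fh ?hdtl // pv eqxx.
rewrite vhd (negbTE fnh) andbF addn0.
case: (eqVneq (froot p v) tl) => [ft|fnt] /=.
- rewrite -!cats1 ?all_cat ?count_cat /= ?andbT ?addn0.
  rewrite lr andbF addn0; split => //.
  by case: (eqVneq (p v) v) => //= pv; rewrite vtl ?ft ?eqxx // pv eqxx.
- rewrite addn0 -IH3 -/p; split => //.
  by case: (eqVneq (p v) v) => //= pv; rewrite vtl ?fnt // pv eqxx.
Qed.
End Process3.
Section Decomp.
Variable n : nat.
Definition sigT := {ffun 'I_n.+1 -> {set 'I_n}}.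
Definition betT := {ffun 'I_n.+1 -> bool}.
Definition join (s : sigT) (b : betT) : outcome n := [ffun i => (s i, b i)].
Definition splitw (w : outcome n) : sigT * betT := ([ffun i => (w i).1], [ffun i => (w i).2]).

Definition OS : {set sigT} := [set s : sigT | [forall i : 'I_n.+1,
  if 2 <= i then (#|s i| == 2) && [forall x in s i, x < i] else s i == set0]].
Definition BB : {set betT} := [set b : betT | [forall i : 'I_n.+1, (i < 2) ==> (b i == false)]].

Lemma join_Omega s b : (join s b \in Omega n) = (s \in OS) && (b \in BB).
Proof.
rewrite !inE; apply/forallP/andP => [H|[/forallP H1 /forallP H2]].
  split; apply/forallP => i; move: (H i); rewrite !ffunE /=.
  - by case: ifP => // _ /eqP [-> _].
  - by rewrite [i < 2]ltnNge; case: ifP => //= _ /eqP [_ ->].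
move=> i; move: (H1 i) (H2 i); rewrite !ffunE /= [i < 2]ltnNge; case: ifP => //= _.
by move=> /eqP -> /eqP ->.
Qed.

Lemma splitK : cancel splitw (fun x => join x.1 x.2).
Proof. by move=> w; apply/ffunP => i; rewrite !ffunE; case: (w i). Qed.
Lemma joinK : cancel (fun x => join x.1 x.2) splitw.
Proof. by case=> s b; congr pair; apply/ffunP => i; rewrite !ffunE. Qed.

Lemma card_decomp (E : pred (outcome n)) :
  #|[set w in Omega n | E w]| = \sum_(s in OS) #|[set b in BB | E (join s b)]|.
Proof.
rewrite -sum1_card (reindex (fun x : sigT * betT => join x.1 x.2)); last first.
  by exists splitw => x _; [apply: joinK | apply: splitK].
rewrite big_mkcond /= -(pair_big xpredT xpredT (fun s b => if join s b \in [set w in Omega n | E w] then 1 else 0)) /=.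
rewrite [RHS]big_mkcond; apply: eq_bigr => s _.
case: (boolP (s \in OS)) => sO.
  rewrite -sum1_card [RHS]big_mkcond; apply: eq_bigr => b _.
  by rewrite [join s b \in _]inE join_Omega sO [b \in [set _ in _ | _]]inE.
rewrite big1 // => b _; by rewrite [join s b \in _]inE join_Omega (negbTE sO).
Qed.
End Decomp.
Fixpoint allb (m : nat) : seq (seq bool) :=
  if m is m'.+1 then map (cons true) (allb m') ++ map (cons false) (allb m') else [:: [::]].

Lemma size_allb m : size (allb m) = 2 ^ m.
Proof. by elim: m => //= m IH; rewrite size_cat !size_map IH expnS mul2n addnn. Qed.

Lemma allb_size m s : s \in allb m -> size s = m.
Proof.
elim: m s => [|m IH] s /=; first by rewrite inE => /eqP ->.
by rewrite mem_cat => /orP [] /mapP [s' /IH <- ->].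
Qed.

Section Fiber.
Variable n : nat.
Implicit Types (b : betT n).

Definition flip (i : 'I_n.+1) b : betT n := [ffun j => if j == i then ~~ b j else b j].

Lemma flipK i : involutive (flip i).
Proof. move=> b; apply/ffunP => j; rewrite !ffunE; case: eqP => //= _; by rewrite negbK. Qed.

Lemma flip_BB (i : 'I_n.+1) b : 2 <= i -> (flip i b \in BB n) = (b \in BB n).
Proof.
move=> hi; rewrite !inE; apply: eq_forallb => j; rewrite ffunE.
case: (eqVneq j i) => [->|//]; by rewrite ltnNge hi.
Qed.

Lemma flip_map (i : 'I_n.+1) b (t : 'I_n.+1 -> bool) (L : seq 'I_n.+1) : i \notin L ->
  map (fun j => flip i b j (+) t j) L = map (fun j => b j (+) t j) L.
Proof.
move=> ni; apply/eq_in_map => j jL; rewrite ffunE.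
case: (eqVneq j i) => // e; by rewrite -e jL in ni.
Qed.

Lemma card_split_bit (i : 'I_n.+1) c (P : pred (betT n)) :
  #|[set b in BB n | P b]| =
  #|[set b in BB n | (b i == c) && P b]| + #|[set b in BB n | (b i == ~~ c) && P b]|.
Proof.
rewrite -(cardID [pred b : betT n | b i == c] [set b in BB n | P b]).
congr (_ + _); apply: eq_card => b; rewrite !inE /=; set X := [forall _, _];
  by case: X; case: (P b); case: (b i); case: c.
Qed.

Lemma half_bit (i : 'I_n.+1) c (t : 'I_n.+1 -> bool) (L : seq 'I_n.+1) (Q : pred (seq bool)) : 2 <= i -> i \notin L ->
  #|[set b in BB n | (b i == c) && Q (map (fun j => b j (+) t j) L)]| =
  #|[set b in BB n | (b i == ~~ c) && Q (map (fun j => b j (+) t j) L)]|.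
Proof.
move=> hi ni.
rewrite -(card_imset _ (can_inj (flipK i))) (can2_imset_pre _ (flipK i) (flipK i)).
apply: eq_card => b; rewrite inE [flip i b \in [set _ in _ | _]]inE [b \in [set _ in _ | _]]inE flip_BB // flip_map // ffunE eqxx.
by case: (b i); case: c.
Qed.

Lemma fiber (t : 'I_n.+1 -> bool) (L : seq 'I_n.+1) (Phi : pred (seq bool)) : uniq L -> all (fun i : 'I_n.+1 => 2 <= i) L ->
  #|[set b in BB n | Phi (map (fun j => b j (+) t j) L)]| * 2 ^ size L =
  #|BB n| * count Phi (allb (size L)).
Proof.
elim: L Phi => [|i L IH] Phi /=.
  move=> _ _; rewrite muln1 addn0; case: (Phi [::]).
    rewrite /nat_of_bool muln1; by apply: eq_card => b; rewrite [b \in [set _ in _ | _]]inE andbT.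
  by rewrite muln0; apply/eqP; rewrite cards_eq0; apply/eqP/setP => b; rewrite !inE andbF.
case/andP => ni uL /andP [hi aL].
rewrite (card_split_bit i (~~ t i)) negbK.
have e1 : #|[set b in BB n | (b i == ~~ t i) && Phi (b i (+) t i :: [seq b j (+) t j | j <- L])]| =
          #|[set b in BB n | (b i == ~~ t i) && Phi (true :: [seq b j (+) t j | j <- L])]|.
  apply: eq_card => b; rewrite !inE; case: (eqVneq (b i) (~~ t i)) => //= ->.
  by case: (t i).
have e2 : #|[set b in BB n | (b i == t i) && Phi (b i (+) t i :: [seq b j (+) t j | j <- L])]| =
          #|[set b in BB n | (b i == t i) && Phi (false :: [seq b j (+) t j | j <- L])]|.
  apply: eq_card => b; rewrite !inE; case: (eqVneq (b i) (t i)) => //= ->.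
  by rewrite addbb.
rewrite e1 e2.
set A := #|[set b in BB n | (b i == ~~ t i) && Phi (true :: [seq b j (+) t j | j <- L])]|.
set B := #|[set b in BB n | (b i == t i) && Phi (false :: [seq b j (+) t j | j <- L])]|.
have hA : #|[set b in BB n | Phi (true :: [seq b j (+) t j | j <- L])]| = 2 * A.
  rewrite (card_split_bit i (~~ t i)) negbK.
  by rewrite (half_bit (t i) t (fun s => Phi (true :: s)) hi ni) mul2n addnn.
have hB : #|[set b in BB n | Phi (false :: [seq b j (+) t j | j <- L])]| = 2 * B.
  rewrite (card_split_bit i (t i)).
  by rewrite -(half_bit (t i) t (fun s => Phi (false :: s)) hi ni) mul2n addnn.
rewrite count_cat !count_map mulnDr.
rewrite -(IH (fun s => Phi (true :: s))) // -(IH (fun s => Phi (false :: s))) //.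
rewrite hA hB expnS; set z := 2 ^ size L; nia.
Qed.
End Fiber.
Lemma count_allb_size (psi : nat -> bool) m :
  count (fun s => psi (size s)) (allb m) = psi m * 2 ^ m.
Proof.
rewrite (@eq_in_count _ _ (fun _ => psi m)); last by move=> s /allb_size ->.
case: (psi m); rewrite ?mul1n ?mul0n; first by rewrite count_predT size_allb.
by rewrite count_pred0.
Qed.

Lemma count_lead m k : count (fun s => lead s == k) (allb m) =
  if k < m then 2 ^ (m - k.+1) else (k == m).
Proof.
elim: m k => [|m IH] k /=; first by case: k.
rewrite count_cat !count_map.
rewrite (@eq_count _ (preim (cons false) (fun s => lead s == k)) (fun _ => k == 0)); last by move=> s /=; rewrite eq_sym.
rewrite (@eq_count _ (preim (cons true) (fun s => lead s == k)) (fun s => if k is k'.+1 then lead s == k' else false)); last first.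
  by move=> s /=; case: k.
case: k => [|k].
  by rewrite count_pred0 /= count_predT size_allb subn1.
rewrite IH count_pred0 addn0 ltnS.
by case: ltnP.
Qed.

Lemma sum_bin0 l : \sum_(j < l.+1) 'C(0, j) = 1.
Proof. by rewrite big_ord_recl bin0 big1 // => j _; rewrite bin0n. Qed.

Lemma count_lh m k l : count (fun s => (k <= lead s) && (count negb s <= l)) (allb m) =
  if k <= m then \sum_(j < l.+1) 'C(m - k, j) else 0.
Proof.
elim: m k l => [|m IH] k l /=.
  by case: k => //=; rewrite sum_bin0.
rewrite count_cat !count_map.
case: k => [|k].
  rewrite (@eq_count _ (preim (cons true) _) (fun s => (0 <= lead s) && (count negb s <= l))) //.
  rewrite IH /= subn0.
  rewrite (@eq_count _ (preim (cons false) _) (fun s => if l is l'.+1 then (0 <= lead s) && (count negb s <= l') else false)); last first.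
    by move=> s /=; case: l.
  case: l => [|l]; first by rewrite count_pred0 addn0 !big_ord1 !bin0.
  rewrite IH /= subn0.
  rewrite [in RHS]big_ord_recl bin0 [X in _ = 1 + X](eq_bigr (fun j : 'I_l.+1 => 'C(m, j.+1) + 'C(m, j))); last first.
    by move=> j _; rewrite /bump /= binS.
  rewrite big_split /= [X in X + _ = _]big_ord_recl bin0.
  by rewrite addnA.
rewrite (@eq_count _ (preim (cons true) _) (fun s => (k <= lead s) && (count negb s <= l))) //.
rewrite (@eq_count _ (preim (cons false) _) (fun s => false)) // count_pred0 addn0 IH.
by rewrite ltnS subSS.
Qed.
Section Final.
Variables (n : nat) (v : 'I_n).

Definition bfalse : betT n := [ffun _ => false].
Definition w0 (s : sigT n) := join s bfalse.
Definition Lsig (s : sigT n) := Ls v (w0 s) n.-1.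
Definition isA (w : outcome n) (t : 'I_n.+1) := froot (F w t) v == ra (F w t) (w t) v.
Definition Tsig (s : sigT n) (t : 'I_n.+1) := ~~ isA (w0 s) t.

Lemma Tn_after (w : outcome n) : Tn w = after w n.-1.
Proof. by rewrite /Tn /F subn1. Qed.

Lemma dn_ws (w : outcome n) : w \in Omega n -> dn w v = lead (ws v w n.-1).
Proof.
move=> wO; have [h _ _] := invariant v wO (leqnn n.-1).
by rewrite /dn -h Tn_after.
Qed.

Lemma hn_ws (w : outcome n) : w \in Omega n -> hn w v = count negb (ws v w n.-1).
Proof.
move=> wO; have [_ h _] := invariant v wO (leqnn n.-1).
by rewrite -h /hn Tn_after.
Qed.

Lemma times_uniq : uniq (times n n.-1).
Proof.
rewrite /times map_inj_in_uniq ?iota_uniq // => k1 k2.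
rewrite !mem_iota /= !add0n => l1 l2 /(congr1 val) /=.
rewrite !inordK'; lia.
Qed.

Lemma Ls_uniq (w : outcome n) : uniq (Ls v w n.-1).
Proof. exact/filter_uniq/times_uniq. Qed.

Lemma mem_times (t : 'I_n.+1) : 2 <= t -> t \in times n n.-1.
Proof.
move=> ht; apply/mapP; exists (n - t).
  rewrite mem_iota add0n; have := ltn_ord t; lia.
apply: val_inj; rewrite /= inordK' ?leq_subr //.
have := ltn_ord t; lia.
Qed.

Lemma times_ge2 (t : 'I_n.+1) : t \in times n n.-1 -> exists2 K, K < n.-1 & t = inord (n - K).
Proof.
by case/mapP => K; rewrite mem_iota add0n => /andP [_ lK] ->; exists K.
Qed.

Lemma Ls_all (w : outcome n) : all (fun i : 'I_n.+1 => 2 <= i) (Ls v w n.-1).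
Proof.
apply/allP => t; rewrite mem_filter => /andP [_ /times_ge2 [K lK ->]].
rewrite inordK'; lia.
Qed.

Lemma Sel_card (w : outcome n) : #|Sel w v| = size (Ls v w n.-1).
Proof.
have /card_uniqP <- := Ls_uniq w; apply: eq_card => t.
rewrite mem_filter; case: (boolP (t \in Sel w v)) => //= tS.
by rewrite mem_times //; move: tS; rewrite inE => /andP [].
Qed.

Lemma om_isA (w : outcome n) (t : 'I_n.+1) : w \in Omega n -> t \in Ls v w n.-1 -> om v w t = (w t).2 (+) ~~ isA w t.
Proof.
move=> wO; rewrite mem_filter => /andP [tS /times_ge2 [K lK et]].
move: tS; rewrite et Sel_step // => hin.
have nab := ab_distinct v wO lK (size_after v wO (ltnW lK)).
rewrite /om /isA F_inord; last lia.
move: hin; rewrite /hdm /tlm; case: (w (inord (n - K))).2 => /= hin.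
  by rewrite negbK.
move: hin; rewrite !inE; case: (eqVneq (froot (after w K) v) (ra (after w K) (w (inord (n - K))) v)) => [e|ne] /=.
  by rewrite e (negbTE nab).
by rewrite orbF.
Qed.

Lemma ws_join (s : sigT n) (b : betT n) : s \in OS n -> b \in BB n ->
  ws v (join s b) n.-1 = map (fun t => b t (+) Tsig s t) (Lsig s).
Proof.
move=> sO bB.
have wO : join s b \in Omega n by rewrite join_Omega sO.
have E : sig_eq (join s b) (w0 s) by move=> i; rewrite !ffunE.
have eL : Ls v (join s b) n.-1 = Lsig s.
  by rewrite /Lsig /Ls (Sel_inv v E).
rewrite /ws eL; apply/eq_in_map => t tL.
rewrite om_isA // ?eL // ffunE /Tsig /isA /=.
congr (_ (+) ~~ _).
apply: isA_rel; first exact: after_rel.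
by rewrite !ffunE.
Qed.

Lemma Lsig_size (s : sigT n) : size (Lsig s) <= n.
Proof.
rewrite /Lsig /Ls size_filter (leq_trans (count_size _ _)) // /times size_map size_iota.
exact: leq_pred.
Qed.
End Final.
Local Open Scope ring_scope.

Lemma PminG_eq (m k : nat) : (count (fun s => lead s == k) (allb m))%:R / (2 : rat) ^+ m = PminG m k.
Proof.
rewrite count_lead /PminG /tailG; case: ltnP => lkm.
  have em : m = ((m - k.+1) + k.+1)%N by rewrite subnK.
  rewrite [in X in _ / X]em exprD natrX exprS.
  have h1 : (2 : rat) ^+ (m - k.+1) != 0 by rewrite expf_neq0.
  have h2 : (2 : rat) ^+ k != 0 by rewrite expf_neq0.
  field; rewrite h1 h2 //.
case: (boolP (k == m)) => /= [/eqP km|_]; last by rewrite mul0r.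
subst k; by rewrite mul1r.
Qed.

Lemma ch_eq (m k l : nat) : (count (fun s => (k <= lead s)%N && (count negb s <= l)%N) (allb m))%:R / (2 : rat) ^+ m
  = tailG k * (((k <= m)%N)%:R * binom_cdf (m - k) l).
Proof.
rewrite count_lh /tailG; case: leqP => km; last by rewrite mul0r mul0r mulr0.
rewrite mul1r /binom_cdf natr_sum mulr_suml mulr_sumr; apply: eq_bigr => j _.
have em : m = ((m - k) + k)%N by rewrite subnK.
rewrite [in X in _ / X]em exprD.
have h1 : (2 : rat) ^+ (m - k) != 0 by rewrite expf_neq0.
have h2 : (2 : rat) ^+ k != 0 by rewrite expf_neq0.
field; rewrite h1 h2 //.
Qed.

Section Main.
Variables (n : nat) (v : 'I_n).

Lemma cardPhi (s : sigT n) (Phi : pred (seq bool)) : s \in OS n ->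
  (#|[set b in BB n | Phi (ws v (join s b) n.-1)]|%:R : rat) =
  #|BB n|%:R * ((count Phi (allb (size (Lsig v s))))%:R / 2 ^+ size (Lsig v s)).
Proof.
move=> sO.
have -> : #|[set b in BB n | Phi (ws v (join s b) n.-1)]| =
          #|[set b in BB n | Phi (map (fun t => b t (+) Tsig v s t) (Lsig v s))]|.
  apply: eq_card => b; rewrite [b \in [set _ in _ | _]]inE [b \in [set _ in _ | _]]inE.
  by case: (boolP (b \in BB n)) => //= bB; rewrite ws_join.
have h := @fiber _ (Tsig v s) (Lsig v s) Phi (Ls_uniq _ _) (Ls_all _ _).
apply/(@mulIf _ (2 ^+ size (Lsig v s))); first by rewrite expf_neq0.
by rewrite -mulrA mulfVK ?expf_neq0 // -natrX -natrM h natrM.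
Qed.

Lemma PrPhi (E : pred (outcome n)) (Phi : pred (seq bool)) :
  (forall w, w \in Omega n -> E w = Phi (ws v w n.-1)) ->
  Pr E = (#|BB n|%:R / #|Omega n|%:R) *
         \sum_(s in OS n) ((count Phi (allb (size (Lsig v s))))%:R / 2 ^+ size (Lsig v s)).
Proof.
move=> hE; rewrite /Pr.
have -> : #|[set w in Omega n | E w]| = #|[set w in Omega n | Phi (ws v w n.-1)]|.
  apply: eq_card => w; rewrite [w \in [set _ in _ | _]]inE [w \in [set _ in _ | _]]inE.
  by case: (boolP (w \in Omega n)) => //= wO; rewrite hE.
rewrite card_decomp natr_sum.
rewrite (eq_bigr (fun s => #|BB n|%:R * ((count Phi (allb (size (Lsig v s))))%:R / 2 ^+ size (Lsig v s)))); last by move=> s sO; apply: cardPhi.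
by rewrite -mulr_sumr mulrAC.
Qed.

Lemma regroup (f : sigT n -> nat) (g : nat -> rat) : (forall s, (f s < n.+1)%N) ->
  \sum_(s < n.+1) (\sum_(x in OS n) ((f x == s)%:R : rat)) * g s = \sum_(x in OS n) g (f x).
Proof.
move=> hf.
rewrite (eq_bigr (fun s : 'I_n.+1 => \sum_(x in OS n) (f x == s)%:R * g s)); last by move=> s _; rewrite mulr_suml.
rewrite exchange_big /=; apply: eq_bigr => x _.
rewrite (bigD1 (Ordinal (hf x))) //= eqxx mul1r big1 ?addr0 // => j nj.
have -> : (f x == j) = false.
  apply/negbTE; apply: contra nj => /eqP e; apply/eqP; apply: val_inj => /=; by rewrite e.
by rewrite mul0r.
Qed.

Lemma Pr_size (psi : nat -> bool) :
  Pr (fun w => psi #|Sel w v|) = (#|BB n|%:R / #|Omega n|%:R) *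
    \sum_(s in OS n) (psi (size (Lsig v s)))%:R.
Proof.
rewrite (@PrPhi _ (fun x => psi (size x))); last by move=> w _; rewrite Sel_card /ws size_map.
congr (_ * _); apply: eq_bigr => s _.
by rewrite count_allb_size natrM natrX mulfK // expf_neq0.
Qed.
End Main.
Unset Implicit Arguments.

Theorem lemma2p5 (n : nat) (v : 'I_n) :
  (forall k : nat,
     Pr (fun w => dn w v == k) =
     \sum_(s < n.+1) Pr (fun w => #|Sel w v| == s) * PminG s k)
  /\
  (forall k l : nat,
     Pr (fun w => (k <= dn w v)%N && (hn w v <= l)%N) =
     tailG k * \sum_(s < n.+1)
        Pr (fun w => (#|Sel w v| == s) && (k <= s)%N) * binom_cdf (s - k) l).
Proof.
split.
- move=> k.
  rewrite (@PrPhi n v _ (fun x => lead x == k)); last by move=> w wO; rewrite dn_ws.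
  transitivity ((#|BB n|%:R / #|Omega n|%:R) * \sum_(x in OS n) PminG (size (Lsig v x)) k).
    by congr (_ * _); apply: eq_bigr => x _; apply: PminG_eq.
  rewrite -(@regroup n (fun x => size (Lsig v x)) (fun s => PminG s k)); last first.
    by move=> x; rewrite ltnS Lsig_size.
  rewrite mulr_sumr; apply: eq_bigr => s _.
  by rewrite (Pr_size v (fun m => m == s)) mulrA.
- move=> k l.
  rewrite (@PrPhi n v _ (fun x => (k <= lead x)%N && (count negb x <= l)%N)); last first.
    by move=> w wO; rewrite dn_ws ?hn_ws.
  transitivity ((#|BB n|%:R / #|Omega n|%:R) * \sum_(x in OS n)
     (tailG k * (((k <= size (Lsig v x))%N)%:R * binom_cdf (size (Lsig v x) - k) l))).
    by congr (_ * _); apply: eq_bigr => x _; apply: ch_eq.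
  rewrite -mulr_sumr mulrCA; congr (tailG k * _).
  rewrite -(@regroup n (fun x => size (Lsig v x)) (fun s => ((k <= s)%N)%:R * binom_cdf (s - k) l)); last first.
    by move=> x; rewrite ltnS Lsig_size.
  rewrite mulr_sumr; apply: eq_bigr => s _.
  rewrite (Pr_size v (fun m => (m == s) && (k <= s)%N)).
  have -> : \sum_(x in OS n) (((size (Lsig v x) == s) && (k <= s)%N)%:R : rat) =
            (\sum_(x in OS n) ((size (Lsig v x) == s)%:R : rat)) * ((k <= s)%N)%:R.
    by rewrite mulr_suml; apply: eq_bigr => x _; rewrite -natrM mulnb.
  by rewrite !mulrA.
Qed.
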